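(* Let $(M,\cdot,1)$ be a monoid and $\Sigma$ a finite alphabet. Let $A1,\dots,An$ be $n\ge1$ minimal and transition-equalized $M$-DFAs, and for each $k$ let $(g_{Ak},f_{Ak})$ be the natural factorization on $L$ induced by $Ak$ (for some selection function). Let $(g,f)=(g_{A1},f_{A1})\ast(g_{A2},f_{A2})\ast\cdots\ast(g_{An},f_{An})$. Then $$\mathrm{RcgCap}^{(g,f)}_L\supseteq\bigcup_{k=1}^n\mathrm{RcgCap}^{(g_{Ak},f_{Ak})}_L.$$
   Context: $L$ is the set of all functions $\Sigma^*\to M$; $\varepsilon$ the empty word; $(m\cdot\ell)(\gamma)=m\cdot\ell(\gamma)$; $\Delta_\alpha(\ell)(\gamma)=\ell(\alpha\gamma)$. A factorization on $L$ is a pair $g:L\to M$, $f:L\to L$ with $g(\ell)\cdot f(\ell)=\ell$. The composition is $(g_1,f_1)\ast(g_2,f_2)=(g_1\cdot(g_2\circ f_1),f_2\circ f_1)$ with $(g\cdot g')(\ell)=g(\ell)\cdot g'(\ell)$ (associative). Define $S^{(g,f)}_\varepsilon=\mathrm{id}_L$, $S^{(g,f)}_{\alpha\sigma}=f\circ\Delta_\sigma\circ S^{(g,f)}_\alpha$. $\mathrm{RcgCap}^{(g,f)}_L$ is the set of $\ell\in L$ such that $\{S^{(g,f)}_\alpha(f(\ell))\mid\alpha\in\Sigma^*\}$ is finite (equivalently, the automaton $N^{(g,f)}(f(\ell),1)$ with these states is an $M$-DFA). An $M$-DFA is $A=(Q,\Sigma,u,i_u,\delta,w,\rho)$ with $Q$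 finite nonempty, initial state $u$, initial value $i_u\in M$, $\delta:Q\times\Sigma\to Q$, $w:Q\times\Sigma\to M$, $\rho:Q\to M$; with $q\alpha$ the extended transition and $w^*(q,\varepsilon)=1$, $w^*(q,\alpha\sigma)=w^*(q,\alpha)\cdot w(q\alpha,\sigma)$, $\mathcal{A}(\alpha)=i_u\cdot w^*(u,\alpha)\cdot\rho(u\alpha)$ is its language and $\mathcal{A}_q(\alpha)=w^*(q,\alpha)\cdot\rho(q\alpha)$. Minimal: no $M$-DFA with the same language has fewer states. Transition-equalized: $\Delta_\sigma(\mathcal{A}_q)=\Delta_\tau(\mathcal{A}_p)$ implies $\delta(q,\sigma)=\delta(p,\tau)$ and $w(q,\sigma)=w(p,\tau)$. Natural factorization induced by $A$: $P_A=\{((\sigma,q),\Delta_\sigma(\mathcal{A}_q))\mid\sigma\in\Sigma,q\in Q\}\cup\{((\varepsilon,u),\mathcal{A})\}$, with elements equivalent iff their language components are equal; a selection function $\pi$ chooses a representative per class, always $((\varepsilon,u),\mathcal{A})$ for its class. $f_A(\mathcal{A})=\mathcal{A}_u$, $g_A(\mathcal{A})=i_u$; if $\ell\neq\mathcal{A}$ is the language component of a class with representative $((\sigma,q),\Delta_\sigma(\mathcal{A}_q))$, then $f_A(\ell)=\mathcal{A}_{q\sigma}$, $g_A(\ell)=w(q,\sigma)$; otherwise $f_A(\ell)=\ell$, $g_A(\ell)=1$. *)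

(* Defs.v *)
From Stdlib Require Import ClassicalEpsilon.
From mathcomp Require Import all_boot.

Set Implicit Arguments.
Unset Strict Implicit.
Unset Printing Implicit Defensive.

Record monoid := Monoid {
  mcar :> Type;
  mmul : mcar -> mcar -> mcar;
  mone : mcar;
  mmulA : forall x y z, mmul x (mmul y z) = mmul (mmul x y) z;
  mmul1l : forall x, mmul mone x = x;
  mmul1r : forall x, mmul x mone = x
}.

Section Defs.
Variables (Mo : monoid) (Sigma : finType).

Definition lang := seq Sigma -> Mo.

Definition scal (m : Mo) (l : lang) : lang := fun g => mmul m (l g).
Definition Delta (a : Sigma) (l : lang) : lang := fun g => l (a :: g).

Definition fact := ((lang -> Mo) * (lang -> lang))%type.

Definition is_factorization (gf : fact) : Prop :=
  forall l, scal (gf.1 l) (gf.2 l) = l.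

Definition comp (gf1 gf2 : fact) : fact :=
  (fun l => mmul (gf1.1 l) (gf2.1 (gf1.2 l)), fun l => gf2.2 (gf1.2 l)).

(* n-fold composition of a nonempty list (comp is associative) *)
Definition comp_list (s : seq fact) : fact :=
  match s with
  | [::] => (fun _ => mone Mo, fun l => l)
  | x :: s' => foldl comp x s'
  end.

Definition Sop (gf : fact) (al : seq Sigma) (l : lang) : lang :=
  foldl (fun l' a => gf.2 (Delta a l')) l al.

Definition RcgCap (gf : fact) (l : lang) : Prop :=
  exists s : list lang, forall al, List.In (Sop gf al (gf.2 l)) s.

Record DFA := MkDFA {
  st : finType;
  init : st;
  iinit : Mo;
  delta : st -> Sigma -> st;
  wt : st -> Sigma -> Mo;
  rho : st -> Mo
}.

Definition dstar (A : DFA) (q : st A) (al : seq Sigma) : st A :=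
  foldl (@delta A) q al.

Definition wstar (A : DFA) (q : st A) (al : seq Sigma) : Mo :=
  (foldl (fun (pm : st A * Mo) a => (delta pm.1 a, mmul pm.2 (wt pm.1 a)))
         (q, mone Mo) al).2.

Definition dlang (A : DFA) : lang :=
  fun al => mmul (mmul (iinit A) (wstar (init A) al)) (rho (dstar (init A) al)).

Definition dlangq (A : DFA) (q : st A) : lang :=
  fun al => mmul (wstar q al) (rho (dstar q al)).

Definition minimal (A : DFA) : Prop :=
  forall B : DFA, dlang B = dlang A -> #|st A| <= #|st B|.

Definition trans_equalized (A : DFA) : Prop :=
  forall (q p : st A) (a b : Sigma),
    Delta a (dlangq q) = Delta b (dlangq p) ->
    delta q a = delta p b /\ wt q a = wt p b.

(* Selection function: for each language l, the representative of the class
   of elements of P_A whose language component is l.  [Some (a,q)] stands for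
   ((a,q), Delta_a(A_q)); the representative ((eps,u), A) of the class of A
   is handled separately in the definition of the natural factorization. *)
Definition selfun (A : DFA) := lang -> option (Sigma * st A).

Definition selection (A : DFA) (pi : selfun A) : Prop :=
  forall l,
    (forall a q, pi l = Some (a, q) -> Delta a (dlangq q) = l) /\
    ((exists (a : Sigma) (q : st A), Delta a (dlangq q) = l) -> pi l <> None).

Definition nat_f (A : DFA) (pi : selfun A) (l : lang) : lang :=
  if excluded_middle_informative (l = dlang A) then dlangq (init A)
  else match pi l with
       | Some (a, q) => dlangq (delta q a)
       | None => l
       end.

Definition nat_g (A : DFA) (pi : selfun A) (l : lang) : Mo :=
  if excluded_middle_informative (l = dlang A) then iinit A
  else match pi l with
       | Some (a, q) => wt q a
       | None => mone Mo
       end.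

Definition nat_fact (A : DFA) (pi : selfun A) : fact := (nat_g pi, nat_f pi).

End Defs.

(* Main.v *)
Require Import Defs.
From mathcomp Require Import all_boot.
From Stdlib Require Import ClassicalEpsilon Classical.
From Stdlib Require List.

Set Implicit Arguments.
Unset Strict Implicit.

Lemma in_seq_In (T : eqType) (x : T) (s : seq T) : x \in s -> List.In x s.
Proof.
elim: s => [|y s IH] //=; rewrite inE => /orP [/eqP ->|H]; [by left|by right; apply IH].
Qed.

Section Aux.
Variables (Mo : monoid) (Sigma : finType) (n : nat)
  (A : 'I_n.+1 -> DFA Mo Sigma)
  (pi : forall k : 'I_n.+1, selfun (A k))
  (Hpi : forall k, selection (pi k)).

Definition Tk (k : 'I_n.+1) : list (lang Mo Sigma) :=
  List.map (@dlangq _ _ (A k)) (enum (st (A k))).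

Definition Dk (k : 'I_n.+1) (y : lang Mo Sigma) : Prop :=
  y = dlang (A k) \/ exists a (q : st (A k)), Delta a (dlangq q) = y.

Definition U : list (lang Mo Sigma) := List.flat_map Tk (enum 'I_n.+1).

Definition Fk k := nat_f (pi k).

Lemma F1a k y : Dk k y -> List.In (Fk k y) (Tk k).
Proof.
move=> HD; rewrite /Fk /nat_f.
case: excluded_middle_informative => Hy.
  by apply: List.in_map; apply: in_seq_In; rewrite mem_enum.
case E: (pi k y) => [[a q]|].
  by apply: List.in_map; apply: in_seq_In; rewrite mem_enum.
exfalso; case: HD => [//|Hex]; by case: (Hpi k y) => _ /(_ Hex).
Qed.

Lemma F1b k y : ~ Dk k y -> Fk k y = y.
Proof.
move=> HD; rewrite /Fk /nat_f.
case: excluded_middle_informative => Hy.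
  by exfalso; apply: HD; left.
case E: (pi k y) => [[a q]|] //.
exfalso; apply: HD; right; exists a, q.
by case: (Hpi k y) => H _; apply: H.
Qed.

Lemma F2 k y a : List.In y (Tk k) -> Dk k (Delta a y).
Proof.
rewrite /Tk => /List.in_map_iff [q [<- _]]; right; by exists a, q.
Qed.

Lemma InU k y : List.In y (Tk k) -> List.In y U.
Proof.
move=> H; apply/List.in_flat_map; exists k; split => //.
by apply: in_seq_In; rewrite mem_enum.
Qed.

Definition fold ks y := foldl (fun y k => Fk k y) y ks.

Lemma G2 ks y : List.In y U -> List.In (fold ks y) U.
Proof.
elim: ks y => [|k ks IH] y //= Hy; apply: IH.
case: (classic (Dk k y)) => H.
  by apply: (@InU k); apply: F1a.
by rewrite F1b.
Qed.

Lemma G3 ks y j : List.In j ks -> Dk j y -> List.In (fold ks y) U.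
Proof.
elim: ks y => [|k ks IH] y //= [->|Hj] HD.
  by apply: G2; apply: (@InU j); apply: F1a.
case: (classic (Dk k y)) => H.
  by apply: G2; apply: (@InU k); apply: F1a.
by rewrite F1b //; apply: IH.
Qed.

Lemma G4 ks y : (forall j, ~ Dk j y) -> fold ks y = y.
Proof.
move=> H; elim: ks => [|k ks IH] //=; by rewrite F1b.
Qed.

Lemma Key k y : List.In (fold (enum 'I_n.+1) y) U \/
  (fold (enum 'I_n.+1) y = y /\ Fk k y = y).
Proof.
case: (classic (exists j, Dk j y)) => [[j Hj]|H].
  by left; apply: (G3 _ Hj); apply: in_seq_In; rewrite mem_enum.
right; have H' : forall j, ~ Dk j y by move=> j Hj; apply: H; exists j.
by split; [apply: G4|apply: F1b].
Qed.

Lemma comp_fold (x : fact Mo Sigma) ks y :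
  (foldl (@Defs.comp Mo Sigma) x [seq nat_fact (pi k) | k <- ks]).2 y = fold ks (x.2 y).
Proof.
elim: ks x => [|k ks IH] x //=; by rewrite IH.
Qed.

Lemma comp_list_fold y :
  (comp_list [seq nat_fact (pi k) | k <- enum 'I_n.+1]).2 y = fold (enum 'I_n.+1) y.
Proof.
have : (ord0 : 'I_n.+1) \in enum 'I_n.+1 by rewrite mem_enum.
case: (enum 'I_n.+1) => [|k ks] //= _.
by rewrite comp_fold.
Qed.

Lemma Sop_ext (gf : fact Mo Sigma) h al l : (forall y, gf.2 y = h y) ->
  Sop gf al l = foldl (fun l' a => h (Delta a l')) l al.
Proof.
move=> H; rewrite /Sop; elim: al l => [|a al IH] l //=; by rewrite H IH.
Qed.

End Aux.

Theorem lemma7 (Mo : monoid) (Sigma : finType) (n : nat)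
  (A : 'I_n.+1 -> DFA Mo Sigma)
  (pi : forall k : 'I_n.+1, selfun (A k))
  (Hmin : forall k, minimal (A k))
  (Hte : forall k, trans_equalized (A k))
  (Hpi : forall k, selection (pi k))
  (l : lang Mo Sigma) :
  (exists k : 'I_n.+1, RcgCap (nat_fact (pi k)) l) ->
  RcgCap (comp_list [seq nat_fact (pi k) | k <- enum 'I_n.+1]) l.
Proof.
case=> k [s Hs].
exists (U A ++ s) => al.
rewrite comp_list_fold.
rewrite (@Sop_ext _ _ _ (fold pi (enum 'I_n.+1))); last by move=> y; rewrite comp_list_fold.
have Hs' := Hs al.
rewrite (@Sop_ext _ _ _ (Fk pi k)) // in Hs'.
apply/List.in_or_app.
suff : List.In (foldl (fun l' a => fold pi (enum 'I_n.+1) (Delta a l'))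
          (fold pi (enum 'I_n.+1) l) al) (U A) \/
       foldl (fun l' a => fold pi (enum 'I_n.+1) (Delta a l'))
          (fold pi (enum 'I_n.+1) l) al =
       foldl (fun l' a => Fk pi k (Delta a l')) (Fk pi k l) al.
  by case=> [H|->]; [left|right].
elim/last_ind: al {Hs'} => [|be a IH] /=.
  case: (Key Hpi k l) => [H|[-> ->]]; by [left|right].
rewrite !foldl_rcons.
case: IH => [H|->].
  left; case/List.in_flat_map: H => j [Hj Hx].
  apply: (G3 Hpi Hj); exact: F2.
case: (Key Hpi k (Delta a (foldl (fun l' a => Fk pi k (Delta a l')) (Fk pi k l) be))) => [H|[-> ->]];
  by [left|right].
Qed.
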